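(* Let $X$ be a compact metric space and $(x_n)_{n\in\mathbb{N}}$ a dense sequence in $X$. Then there is a coloring $c:[\mathbb{N}]^2\to2$ such that for every infinite $c$-homogeneous set $h\subseteq\mathbb{N}$ the subsequence $(x_n)_{n\in h}$ converges. Consequently the family $\mathcal{C}(x_n)_n=\{y\subseteq\mathbb{N}:(x_n)_{n\in y}\text{ is convergent}\}$ has a Borel selector.
   Context: A set $h$ is $c$-homogeneous if $c$ is constant on $[h]^2$. A Borel selector for a tall family $\mathcal{C}\subseteq2^{\mathbb{N}}$ is a Borel $S:2^{\mathbb{N}}\to2^{\mathbb{N}}$ with $S(x)\subseteq x$, $S(x)\in\mathcal{C}$, and $S(x)$ infinite whenever $x$ is infinite (subsets of $\mathbb{N}$ identified with elements of $2^{\mathbb{N}}$). *)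

(* Defs.v *)
From Stdlib Require Import Reals.
Open Scope R_scope.

Definition is_metric {X : Type} (d : X -> X -> R) : Prop :=
  (forall x y, 0 <= d x y) /\
  (forall x y, d x y = 0 <-> x = y) /\
  (forall x y, d x y = d y x) /\
  (forall x y z, d x z <= d x y + d y z).

Definition ball {X : Type} (d : X -> X -> R) (x : X) (r : R) : X -> Prop :=
  fun y => d x y < r.

Definition metric_open {X : Type} (d : X -> X -> R) (U : X -> Prop) : Prop :=
  forall x, U x -> exists r, 0 < r /\ forall y, ball d x r y -> U y.

Definition metric_compact {X : Type} (d : X -> X -> R) : Prop :=
  forall (I : Type) (U : I -> X -> Prop),
    (forall i, metric_open d (U i)) ->
    (forall x, exists i, U i x) ->
    exists l : list I, forall x, exists i, List.In i l /\ U i x.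

Definition dense_seq {X : Type} (d : X -> X -> R) (x : nat -> X) : Prop :=
  forall (z : X) (eps : R), 0 < eps -> exists n, d (x n) z < eps.

(** Subsets of nat are identified with elements of 2^N = nat -> bool. *)
Definition infinite_set (y : nat -> bool) : Prop :=
  forall N : nat, exists n, (N <= n)%nat /\ y n = true.

Definition subset_of (y z : nat -> bool) : Prop :=
  forall n, y n = true -> z n = true.

(** A coloring c : [N]^2 -> 2, where the pair {m,n} with m < n gets colour c m n. *)
Definition homogeneous (c : nat -> nat -> bool) (h : nat -> bool) : Prop :=
  exists b : bool, forall m n, h m = true -> h n = true -> (m < n)%nat -> c m n = b.

(** (x_n)_{n in y} converges (along the increasing enumeration of y). *)
Definition converges_along {X : Type} (d : X -> X -> R) (x : nat -> X)
    (y : nat -> bool) : Prop :=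
  exists L : X, forall eps, 0 < eps ->
    exists N : nat, forall n, (N <= n)%nat -> y n = true -> d (x n) L < eps.

Definition conv_family {X : Type} (d : X -> X -> R) (x : nat -> X) :
    (nat -> bool) -> Prop :=
  fun y => converges_along d x y.

Inductive borel : ((nat -> bool) -> Prop) -> Prop :=
  | borel_cyl : forall (n : nat) (b : bool), borel (fun f => f n = b)
  | borel_compl : forall A, borel A -> borel (fun f => ~ A f)
  | borel_union : forall A : nat -> (nat -> bool) -> Prop,
      (forall k, borel (A k)) -> borel (fun f => exists k, A k f)
  | borel_ext : forall A B, borel A -> (forall f, A f <-> B f) -> borel B.

Definition borel_map (S : (nat -> bool) -> (nat -> bool)) : Prop :=
  forall B, borel B -> borel (fun f => B (S f)).

Definition borel_selector (C : (nat -> bool) -> Prop)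
    (S : (nat -> bool) -> (nat -> bool)) : Prop :=
  borel_map S /\
  (forall x, subset_of (S x) x) /\
  (forall x, C (S x)) /\
  (forall x, infinite_set x -> infinite_set (S x)).

(* Main.v *)
Require Import Defs.
From Stdlib Require Import Reals.
From Stdlib Require Import Lra Lia Classical ClassicalEpsilon List Arith.
Open Scope R_scope.

Lemma fchoice {A B : Type} (P : A -> B -> Prop) :
  (forall a, exists b, P a b) -> exists f : A -> B, forall a, P a (f a).
Proof.
  intro H. exists (fun a => proj1_sig (constructive_indefinite_description _ (H a))).
  intro a. exact (proj2_sig (constructive_indefinite_description _ (H a))).
Qed.

Lemma ball_open_aux {X} (d : X -> X -> R) (Hmet : is_metric d) (Q : Prop) (c : X) (r : R) :
  metric_open d (fun z => Q /\ d c z < r).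
Proof.
  destruct Hmet as [Hpos [Hzero [Hsym Htri]]].
  intros z [HQ Hz]. exists (r - d c z). split; [lra|].
  intros w Hw. unfold ball in Hw. split; [exact HQ|].
  pose proof (Htri c z w). lra.
Qed.

Lemma complete_along {X} (d : X -> X -> R) (x : nat -> X) (h : nat -> bool)
  (Hmet : is_metric d) (Hcpt : metric_compact d) :
  infinite_set h ->
  (forall eps, 0 < eps -> exists N, forall n m, (N <= n)%nat -> (N <= m)%nat ->
     h n = true -> h m = true -> d (x n) (x m) < eps) ->
  converges_along d x h.
Proof.
  intros Hinf Hcau.
  pose proof Hmet as [Hpos [Hzero [Hsym Htri]]].
  apply NNPP; intro Hno.
  set (P := fun (y : X) (e : R) => 0 < e /\ forall N, exists n, (N <= n)%nat /\ h n = true /\ e <= d (x n) y).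
  assert (Hcov : forall y, exists e, P y e).
  { intro y. apply NNPP; intro Hn. apply Hno. exists y. intros eps Heps.
    apply NNPP; intro Hn2. apply Hn. exists eps. split; [exact Heps|].
    intro N. apply NNPP; intro Hn3. apply Hn2. exists N. intros n HNn Hhn.
    apply Rnot_le_lt. intro Hle. apply Hn3. exists n. repeat split; assumption. }
  destruct (Hcpt (X * R)%type (fun p z => P (fst p) (snd p) /\ d (fst p) z < snd p / 2)) as [l Hl].
  - intro p. apply ball_open_aux. exact Hmet.
  - intro y. destruct (Hcov y) as [e He]. exists (y, e). simpl. split; [exact He|].
    rewrite (proj2 (Hzero y y) eq_refl). destruct He as [He _]. lra.
  - assert (HN : exists N, forall p, In p l -> P (fst p) (snd p) ->
        forall n m, (N <= n)%nat -> (N <= m)%nat -> h n = true -> h m = true ->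
        d (x n) (x m) < snd p / 2).
    { clear Hl. induction l as [|p l IH].
      - exists 0%nat. intros p Hp. destruct Hp.
      - destruct IH as [N1 HN1].
        destruct (classic (P (fst p) (snd p))) as [Hp|Hp].
        + destruct (Hcau (snd p / 2)) as [N2 HN2]. { destruct Hp as [Hp _]. lra. }
          exists (max N1 N2). intros q [Hq|Hq] HPq n m Hn Hm Hhn Hhm.
          * subst q. apply HN2; auto; lia.
          * apply (HN1 q Hq HPq); auto; lia.
        + exists N1. intros q [Hq|Hq] HPq n m Hn Hm Hhn Hhm.
          * subst q. contradiction.
          * apply (HN1 q Hq HPq); auto. }
    destruct HN as [N HN].
    destruct (Hinf N) as [n [Hn Hhn]].
    destruct (Hl (x n)) as [p [Hin [HP Hd]]].
    pose proof HP as [He HPp].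
    destruct (HPp N) as [m [Hm [Hhm Hle]]].
    pose proof (HN p Hin HP n m Hn Hm Hhn Hhm) as H1.
    pose proof (Htri (x m) (x n) (fst p)) as H2.
    rewrite (Hsym (x m) (x n)), (Hsym (x n) (fst p)) in H2. lra.
Qed.

Lemma finite_cover {X} (d : X -> X -> R) (Hmet : is_metric d) (Hcpt : metric_compact d) (r : R) :
  0 < r -> exists l : list X, forall z, exists c, In c l /\ d c z < r.
Proof.
  intro Hr. pose proof Hmet as [Hpos [Hzero [Hsym Htri]]].
  destruct (Hcpt X (fun c z => True /\ d c z < r)) as [l Hl].
  - intro c. apply ball_open_aux. exact Hmet.
  - intro z. exists z. split; [exact I|]. rewrite (proj2 (Hzero z z) eq_refl). exact Hr.
  - exists l. intro z. destruct (Hl z) as [c [Hc [_ Hd]]]. eauto.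
Qed.

Lemma address_system {X} (d : X -> X -> R) (x : nat -> X) (Hmet : is_metric d) (Hcpt : metric_compact d) :
  exists (a : nat -> nat -> nat) (B : nat -> nat) (cen : nat -> nat -> X),
    (forall k n, (a k n < B k)%nat) /\ (forall k n, d (cen k (a k n)) (x n) < / INR (S k)).
Proof.
  assert (HL : forall k, exists l : list X, forall z, exists c, In c l /\ d c z < / INR (S k)).
  { intro k. apply finite_cover; auto. apply Rinv_0_lt_compat. apply lt_0_INR. lia. }
  destruct (fchoice _ HL) as [L HLk].
  assert (HA : forall kn : nat * nat, exists i, (i < length (L (fst kn)))%nat /\
     d (nth i (L (fst kn)) (x 0%nat)) (x (snd kn)) < / INR (S (fst kn))).
  { intros [k n]. simpl. destruct (HLk k (x n)) as [c [Hc Hd]].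
    destruct (In_nth _ _ (x 0%nat) Hc) as [i [Hi Hn]]. exists i. rewrite Hn. auto. }
  destruct (fchoice _ HA) as [A HAk].
  exists (fun k n => A (k, n)), (fun k => length (L k)), (fun k i => nth i (L k) (x 0%nat)).
  split; intros k n; apply (HAk (k, n)).
Qed.

Open Scope nat_scope.

Definition decb (P : Prop) : bool := if excluded_middle_informative P then true else false.

Lemma decb_true P : decb P = true <-> P.
Proof.
  unfold decb. destruct (excluded_middle_informative P); split; intro H;
  try reflexivity; try assumption; try discriminate; contradiction.
Qed.

Lemma ev_const (h : nat -> bool) (g mu : nat -> nat) (N : nat) :
  infinite_set h ->
  (forall m n, N <= m -> m < n -> h m = true -> h n = true -> g m <> g n -> mu n < mu m) ->
  exists N' v, forall n, N' <= n -> h n = true -> g n = v.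
Proof.
  intros Hinf Hmono.
  destruct (Hinf N) as [n0 [Hn0 Hh0]].
  assert (Hgen : forall D n1, N <= n1 -> h n1 = true -> mu n1 <= D ->
     exists N' v, forall n, N' <= n -> h n = true -> g n = v).
  { induction D as [|D IH]; intros n1 Hn1 Hh1 HD;
    (destruct (classic (exists n, n1 < n /\ h n = true /\ g n <> g n1)) as [[n [Hlt [Hhn Hg]]]|Hno];
     [ pose proof (Hmono n1 n Hn1 Hlt Hh1 Hhn (not_eq_sym Hg)) as Hmu
     | exists n1, (g n1); intros n Hn Hhn; destruct (Nat.eq_dec n n1) as [->|Hne]; [reflexivity|];
       apply NNPP; intro Hg; apply Hno; exists n; split; [lia|]; split; [exact Hhn|exact Hg] ]).
    - exfalso; lia.
    - apply (IH n); [lia|exact Hhn|lia]. }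
  apply (Hgen (mu n0) n0); auto.
Qed.

Lemma least_ex (Q : nat -> Prop) : (exists i, Q i) -> exists i, Q i /\ forall i', i' < i -> ~ Q i'.
Proof.
  intros [i Hi]. revert Hi. induction i as [i IH] using (well_founded_induction lt_wf). intro Hi.
  destruct (classic (exists i', i' < i /\ Q i')) as [[i' [Hlt Hq]]|Hno].
  - exact (IH i' Hlt Hq).
  - exists i. split; [exact Hi|]. intros i' Hlt Hq. apply Hno; eauto.
Qed.

Definition Inf (f : nat -> bool) (P : nat -> Prop) : Prop :=
  forall N, exists m, N <= m /\ f m = true /\ P m.
Definition Mt (a : nat -> nat -> nat) (tau : nat -> nat) (k m : nat) : Prop :=
  forall j, j < k -> a j m = tau j.
Definition upd (tau : nat -> nat) (k i : nat) : nat -> nat :=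
  fun j => if Nat.eqb j k then i else tau j.
Fixpoint Br (a : nat -> nat -> nat) (f : nat -> bool) (k : nat) (tau : nat -> nat) : Prop :=
  match k with
  | 0 => True
  | S k' => Br a f k' tau /\ Inf f (Mt a tau k) /\
            forall i, i < tau k' -> ~ Inf f (Mt a (upd tau k' i) k)
  end.

Lemma Inf_mono f (P Q : nat -> Prop) : (forall m, P m -> Q m) -> Inf f P -> Inf f Q.
Proof. intros H HP N. destruct (HP N) as [m [H1 [H2 H3]]]. exists m. repeat split; auto. Qed.

Lemma Mt_ext a tau tau' k m : (forall j, j < k -> tau j = tau' j) -> Mt a tau k m -> Mt a tau' k m.
Proof. intros H H1 j Hj. rewrite <- (H j Hj). apply H1, Hj. Qed.

Lemma Br_ext a f k : forall tau tau', (forall j, j < k -> tau j = tau' j) -> Br a f k tau -> Br a f k tau'.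
Proof.
  induction k as [|k IH]; intros tau tau' H HB; cbn [Br] in *; [exact I|].
  destruct HB as [HB1 [HB2 HB3]]. split; [|split].
  - apply (IH tau); auto.
  - apply (Inf_mono f (Mt a tau (S k))); auto. intro m. apply Mt_ext. auto.
  - intros i Hi HI. apply (HB3 i).
    + rewrite (H k ltac:(lia)); lia.
    + apply (Inf_mono f (Mt a (upd tau' k i) (S k))); auto. intro m. apply Mt_ext.
      intros j Hj. unfold upd. destruct (Nat.eqb j k); auto. symmetry. apply H. lia.
Qed.

Lemma Br_le a f k tau : Br a f k tau -> forall k', k' <= k -> Br a f k' tau.
Proof.
  induction k as [|k IH]; intros HB k' Hk'.
  - replace k' with 0 by lia. exact I.
  - destruct (Nat.eq_dec k' (S k)) as [->|Hne]; [exact HB|]. apply IH; [exact (proj1 HB)|lia].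
Qed.

Lemma Br_unique a f k : forall tau tau', Br a f k tau -> Br a f k tau' -> forall j, j < k -> tau j = tau' j.
Proof.
  induction k as [|k IH]; intros tau tau' H1 H2 j Hj; [lia|].
  cbn [Br] in H1, H2.
  destruct H1 as [H1a [H1b H1c]]. destruct H2 as [H2a [H2b H2c]].
  assert (Hag : forall j, j < k -> tau j = tau' j) by (apply IH; auto).
  destruct (Nat.lt_ge_cases j k) as [Hjk|Hjk]; [auto|].
  assert (j = k) by lia. subst j.
  destruct (Nat.lt_total (tau k) (tau' k)) as [Hlt|[Heq|Hgt]]; [exfalso|exact Heq|exfalso].
  - apply (H2c (tau k) Hlt). apply (Inf_mono f (Mt a tau (S k))); [|exact H1b].
    intro m. apply Mt_ext. intros j Hj'. unfold upd.
    destruct (Nat.eqb_spec j k) as [->|Hne]; [reflexivity|]. apply Hag. lia.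
  - apply (H1c (tau' k) Hgt). apply (Inf_mono f (Mt a tau' (S k))); [|exact H2b].
    intro m. apply Mt_ext. intros j Hj'. unfold upd.
    destruct (Nat.eqb_spec j k) as [->|Hne]; [reflexivity|]. symmetry. apply Hag. lia.
Qed.

Lemma pigeon f (g : nat -> nat) Bd : forall P : nat -> Prop, Inf f P -> (forall m, P m -> g m < Bd) ->
  exists i, i < Bd /\ Inf f (fun m => P m /\ g m = i).
Proof.
  induction Bd as [|Bd IH]; intros P HP Hb.
  - destruct (HP 0) as [m [_ [_ Hm]]]. specialize (Hb m Hm). lia.
  - destruct (classic (Inf f (fun m => P m /\ g m = Bd))) as [Hy|Hn].
    + exists Bd. split; [lia|exact Hy].
    + unfold Inf in Hn. apply not_all_ex_not in Hn. destruct Hn as [N0 HN0].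
      destruct (IH (fun m => P m /\ g m <> Bd)) as [i [Hi HI]].
      * intro N. destruct (HP (max N N0)) as [m [Hm1 [Hm2 Hm3]]]. exists m.
        split; [lia|]. split; [exact Hm2|]. split; [exact Hm3|].
        intro He. apply HN0. exists m. split; [lia|]. repeat split; auto.
      * intros m [Hm1 Hm2]. specialize (Hb m Hm1). lia.
      * exists i. split; [lia|]. eapply Inf_mono; [|exact HI]. intros m [[H1 _] H2]. auto.
Qed.

Lemma Br_exists a B f : infinite_set f -> (forall k n, a k n < B k) ->
  forall k, exists tau, Br a f k tau /\ Inf f (Mt a tau k).
Proof.
  intros Hf Ha. induction k as [|k [tau [HB HI]]].
  - exists (fun _ => 0). split; [exact I|]. intro N. destruct (Hf N) as [m [H1 H2]].
    exists m. repeat split; auto. intros j Hj; lia.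
  - destruct (pigeon f (a k) (B k) _ HI (fun m _ => Ha k m)) as [i0 [Hi0 HI0]].
    set (Q := fun i => Inf f (Mt a (upd tau k i) (S k))).
    assert (HQ : forall i, Inf f (fun m => Mt a tau k m /\ a k m = i) -> Q i).
    { intros i HIi. eapply Inf_mono; [|exact HIi]. intros m [Hm1 Hm2] j Hj. unfold upd.
      destruct (Nat.eqb_spec j k) as [->|Hne]; [auto|]. apply Hm1. lia. }
    destruct (least_ex Q) as [i [Hqi Hmin]]; [eauto|].
    exists (upd tau k i). split; [|exact Hqi].
    cbn [Br]. split; [|split].
    + apply (Br_ext a f k tau); [|exact HB]. intros j Hj. unfold upd.
      destruct (Nat.eqb_spec j k); [lia|reflexivity].
    + exact Hqi.
    + intros i' Hi' HI'. apply (Hmin i').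
      * unfold upd in Hi'. rewrite Nat.eqb_refl in Hi'. exact Hi'.
      * eapply Inf_mono; [|exact HI']. intro m. apply Mt_ext. intros j Hj. unfold upd.
        destruct (Nat.eqb j k); reflexivity.
Qed.

Lemma borel_or' (A C : (nat -> bool) -> Prop) : borel A -> borel C -> borel (fun f => A f \/ C f).
Proof.
  intros HA HC.
  apply borel_ext with (fun f => exists k, (if Nat.eqb k 0 then A else C) f).
  - apply borel_union. intro k. destruct (Nat.eqb k 0); assumption.
  - intro f. split.
    + intros [k Hk]. destruct (Nat.eqb k 0); [left|right]; exact Hk.
    + intros [H|H]; [exists 0|exists 1]; exact H.
Qed.

Lemma borel_and' A C : borel A -> borel C -> borel (fun f => A f /\ C f).
Proof.
  intros HA HC. apply borel_ext with (fun f => ~ (~ A f \/ ~ C f)).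
  - apply borel_compl, borel_or'; apply borel_compl; assumption.
  - intro f. split; [intro H; destruct (classic (A f)); destruct (classic (C f)); tauto | tauto].
Qed.

Lemma borel_ex' (A : nat -> (nat -> bool) -> Prop) : (forall k, borel (A k)) -> borel (fun f => exists k, A k f).
Proof. exact (borel_union A). Qed.

Lemma borel_all' (A : nat -> (nat -> bool) -> Prop) : (forall k, borel (A k)) -> borel (fun f => forall k, A k f).
Proof.
  intro H. apply borel_ext with (fun f => ~ exists k, ~ A k f).
  - apply borel_compl, borel_union. intro k. apply borel_compl, H.
  - intro f. split.
    + intros H1 k. apply NNPP. intro H2. apply H1. eauto.
    + intros H1 [k Hk]. apply Hk, H1.
Qed.

Lemma borel_const' (Q : Prop) : borel (fun _ => Q).
Proof.
  destruct (classic Q) as [HQ|HQ].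
  - apply borel_ext with (fun f => f 0 = true \/ ~ f 0 = true).
    + apply borel_or'; [apply borel_cyl|apply borel_compl, borel_cyl].
    + intro f. split; [auto|intros _; apply classic].
  - apply borel_ext with (fun f => f 0 = true /\ ~ f 0 = true).
    + apply borel_and'; [apply borel_cyl|apply borel_compl, borel_cyl].
    + intro f. split; [tauto|intro H; contradiction].
Qed.

Lemma borel_Inf (P : nat -> Prop) : borel (fun f => Inf f P).
Proof.
  unfold Inf. apply (borel_all' (fun N f => exists m, N <= m /\ f m = true /\ P m)). intro N.
  apply (borel_ex' (fun m f => N <= m /\ f m = true /\ P m)). intro m.
  apply borel_ext with (fun f => (N <= m /\ P m) /\ f m = true).
  - apply borel_and'; [apply borel_const'|apply borel_cyl].
  - intro f. tauto.
Qed.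

Lemma borel_Br a k tau : borel (fun f => Br a f k tau).
Proof.
  induction k as [|k IH]; cbn [Br].
  - apply borel_const'.
  - apply borel_and'; [exact IH|]. apply borel_and'; [apply borel_Inf|].
    apply (borel_all' (fun i f => i < tau k -> ~ Inf f (Mt a (upd tau k i) (S k)))). intro i.
    apply borel_ext with (fun f => ~ (i < tau k) \/ ~ Inf f (Mt a (upd tau k i) (S k))).
    + apply borel_or'; [apply borel_const'|apply borel_compl, borel_Inf].
    + intro f. split; intro H; [tauto|destruct (classic (i < tau k)); tauto].
Qed.

Definition selb a f n s : bool := andb (f n) (decb (Br a f (S s) (fun j => a j n))).
Fixpoint cnt a f n : nat :=
  match n with
  | 0 => 0
  | S n' => cnt a f n' + (if selb a f n' (cnt a f n') then 1 else 0)
  end.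
Definition Sel a f n : bool := selb a f n (cnt a f n).

Lemma borel_selb a n s : borel (fun f => selb a f n s = true).
Proof.
  apply borel_ext with (fun f => f n = true /\ Br a f (S s) (fun j => a j n)).
  - apply borel_and'; [apply borel_cyl|apply borel_Br].
  - intro f. unfold selb. rewrite Bool.andb_true_iff, decb_true. tauto.
Qed.

Lemma borel_cnt a n : forall s, borel (fun f => cnt a f n = s).
Proof.
  induction n as [|n IH]; intro s.
  - cbn [cnt]. apply borel_const'.
  - apply borel_ext with (fun f => (cnt a f n = s /\ ~ selb a f n s = true) \/
        (exists s', s = S s' /\ cnt a f n = s' /\ selb a f n s' = true)).
    + apply borel_or'.
      * apply borel_and'; [apply IH|apply borel_compl, borel_selb].
      * apply (borel_ex' (fun s' f => s = S s' /\ cnt a f n = s' /\ selb a f n s' = true)). intro s'.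
        apply borel_and'; [apply borel_const'|apply borel_and'; [apply IH|apply borel_selb]].
    + intro f. cbn [cnt]. split.
      * intros [[H1 H2]|[s' [-> [H1 H2]]]].
        -- rewrite H1. destruct (selb a f n s) eqn:E; [exfalso; apply H2; reflexivity|lia].
        -- rewrite H1, H2. lia.
      * destruct (selb a f n (cnt a f n)) eqn:E; intro H.
        -- right. exists (cnt a f n). split; [lia|split; [reflexivity|exact E]].
        -- left. split; [lia|]. rewrite <- H, Nat.add_0_r, E. discriminate.
Qed.

Lemma borel_Sel a n : borel (fun f => Sel a f n = true).
Proof.
  apply borel_ext with (fun f => exists s, cnt a f n = s /\ selb a f n s = true).
  - apply (borel_ex' (fun s f => cnt a f n = s /\ selb a f n s = true)). intro s.
    apply borel_and'; [apply borel_cnt|apply borel_selb].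
  - intro f. unfold Sel. split; [intros [s [<- H]]; exact H|intro H; eauto].
Qed.

Lemma Sel_borel_map a : borel_map (Sel a).
Proof.
  intros Bs HB. induction HB as [n b|A HA IH|A HA IH|A C HA IH HAC].
  - destruct b.
    + exact (borel_Sel a n).
    + apply borel_ext with (fun f => ~ Sel a f n = true).
      * apply borel_compl, borel_Sel.
      * intro f. simpl. destruct (Sel a f n); split; intro H; try reflexivity; try discriminate;
        exfalso; apply H; reflexivity.
  - apply borel_compl, IH.
  - exact (borel_union _ IH).
  - apply borel_ext with (fun f => A (Sel a f)); [exact IH|]. intro f. apply HAC.
Qed.

Lemma Sel_sub a f n : Sel a f n = true -> f n = true.
Proof. unfold Sel, selb. intro H. apply Bool.andb_true_iff in H. tauto. Qed.

Lemma Sel_Br a f n : Sel a f n = true -> Br a f (S (cnt a f n)) (fun j => a j n).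
Proof.
  unfold Sel, selb. intro H. apply Bool.andb_true_iff in H. destruct H as [_ H].
  apply (proj1 (decb_true _)) in H. exact H.
Qed.

Lemma cnt_mono a f n n' : n <= n' -> cnt a f n <= cnt a f n'.
Proof. induction 1 as [|n' Hle IH]; [lia|]. cbn [cnt]. lia. Qed.

Lemma cnt_Sel a f n : Sel a f n = true -> cnt a f (S n) = S (cnt a f n).
Proof. unfold Sel. intro H. cbn [cnt]. rewrite H. lia. Qed.

Lemma cnt_stay a f N n : N <= n -> (forall m, N <= m -> m < n -> Sel a f m = false) -> cnt a f n = cnt a f N.
Proof.
  induction 1 as [|n Hle IH]; intro H; [reflexivity|]. cbn [cnt].
  assert (E : Sel a f n = false) by (apply H; lia). unfold Sel in E. rewrite E, IH; [lia|].
  intros m Hm1 Hm2. apply H; lia.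
Qed.

Lemma Sel_inf a B f : (forall k n, a k n < B k) -> infinite_set f -> infinite_set (Sel a f).
Proof.
  intros Ha Hf N.
  destruct (Br_exists a B f Hf Ha (S (cnt a f N))) as [tau [HB HI]].
  destruct (HI N) as [n [Hn [Hfn HM]]].
  destruct (classic (exists m, N <= m /\ m < n /\ Sel a f m = true)) as [[m [H1 [H2 H3]]]|Hno].
  - exists m. split; [lia|exact H3].
  - exists n. split; [exact Hn|].
    assert (Hc : cnt a f n = cnt a f N).
    { apply cnt_stay; [exact Hn|]. intros m H1 H2. destruct (Sel a f m) eqn:E; [|reflexivity].
      exfalso. apply Hno. exists m. split; [|split]; assumption. }
    unfold Sel, selb. rewrite Hc. apply Bool.andb_true_iff. split; [exact Hfn|]. apply (proj2 (decb_true _)).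
    apply (Br_ext a f _ tau); [|exact HB]. intros j Hj. symmetry. apply HM. exact Hj.
Qed.

Lemma cnt_grows a f : infinite_set (Sel a f) -> forall K, exists N, K <= cnt a f N.
Proof.
  intros Hinf K. induction K as [|K [N HN]]; [exists 0; lia|].
  destruct (Hinf N) as [m [Hm Hs]]. exists (S m). rewrite (cnt_Sel a f m Hs).
  pose proof (cnt_mono a f N m Hm). lia.
Qed.

Definition LexLt (u v : nat -> nat) : Prop :=
  exists k, (forall j, j < k -> u j = v j) /\ u k < v k.
Definition col (a : nat -> nat -> nat) (m n : nat) : bool :=
  decb (LexLt (fun k => a k m) (fun k => a k n)).

Open Scope R_scope.

Lemma Sel_conv {X} (d : X -> X -> R) (x : nat -> X) (Hmet : is_metric d) (Hcpt : metric_compact d)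
  a (cen : nat -> nat -> X) (Hc : forall k n, d (cen k (a k n)) (x n) < / INR (S k)) f :
  converges_along d x (Sel a f).
Proof.
  destruct (classic (infinite_set (Sel a f))) as [Hinf|Hfin].
  - apply complete_along; auto. intros eps Heps.
    destruct (archimed_cor1 (eps/2)) as [M [HM HM0]]; [lra|].
    destruct (cnt_grows a f Hinf (M-1)) as [N HN].
    exists N. intros n m Hn Hm Hhn Hhm.
    assert (HB1 : Br a f M (fun j => a j n)).
    { apply (Br_le a f _ _ (Sel_Br a f n Hhn)). pose proof (cnt_mono a f N n Hn). lia. }
    assert (HB2 : Br a f M (fun j => a j m)).
    { apply (Br_le a f _ _ (Sel_Br a f m Hhm)). pose proof (cnt_mono a f N m Hm). lia. }
    pose proof (Br_unique a f M _ _ HB1 HB2 (M-1)%nat ltac:(lia)) as Hagree. simpl in Hagree.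
    pose proof (Hc (M-1)%nat n) as H1. pose proof (Hc (M-1)%nat m) as H2.
    rewrite Hagree in H1. replace (S (M-1)) with M in H1, H2 by lia.
    pose proof Hmet as [_ [_ [Hsym Htri]]].
    pose proof (Htri (x n) (cen (M-1)%nat (a (M-1)%nat m)) (x m)) as H3.
    rewrite (Hsym (x n) (cen (M-1)%nat (a (M-1)%nat m))) in H3. lra.
  - unfold infinite_set in Hfin. apply not_all_ex_not in Hfin. destruct Hfin as [N HN].
    exists (x 0%nat). intros eps Heps. exists N. intros n Hn Hs. exfalso. apply HN. exists n. auto.
Qed.

Lemma part1 {X} (d : X -> X -> R) (x : nat -> X) (Hmet : is_metric d) (Hcpt : metric_compact d)
  (a : nat -> nat -> nat) (B : nat -> nat) (cen : nat -> nat -> X)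
  (Ha : forall k n, (a k n < B k)%nat) (Hc : forall k n, d (cen k (a k n)) (x n) < / INR (S k)) :
  forall h, infinite_set h -> homogeneous (col a) h -> converges_along d x h.
Proof.
  intros h Hinf [b Hb].
  assert (Hstab : forall K, exists N (tau : nat -> nat), forall n, (N <= n)%nat -> h n = true ->
     forall j, (j < K)%nat -> a j n = tau j).
  { induction K as [|K [N [tau Htau]]].
    - exists 0%nat, (fun _ => 0%nat). intros. lia.
    - assert (Hmono : forall m n, (N <= m)%nat -> (m < n)%nat -> h m = true -> h n = true ->
         a K m <> a K n ->
         ((if b then B K - a K n else a K n) < (if b then B K - a K m else a K m))%nat).
      { intros m n Hm Hmn Hhm Hhn Hne.
        assert (Hagree : forall j, (j < K)%nat -> a j m = a j n).
        { intros j Hj. rewrite (Htau m Hm Hhm j Hj), (Htau n ltac:(lia) Hhn j Hj). reflexivity. }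
        pose proof (Hb m n Hhm Hhn Hmn) as Hcol. unfold col in Hcol.
        destruct b; simpl.
        - apply (proj1 (decb_true _)) in Hcol. destruct Hcol as [k [Hk1 Hk2]]. cbv beta in Hk1, Hk2.
          destruct (lt_eq_lt_dec k K) as [[Hlt|Heq]|Hgt].
          + exfalso. rewrite (Hagree k Hlt) in Hk2. lia.
          + subst k. pose proof (Ha K n). lia.
          + exfalso. apply Hne. apply Hk1. exact Hgt.
        - assert (Hn : ~ LexLt (fun k => a k m) (fun k => a k n)).
          { intro HL. apply (proj2 (decb_true _)) in HL. congruence. }
          destruct (Nat.lt_total (a K m) (a K n)) as [Hl|[He|Hg]].
          + exfalso. apply Hn. exists K. split; [exact Hagree|exact Hl].
          + contradiction.
          + exact Hg. }
      destruct (ev_const h (a K) (fun n => if b then (B K - a K n)%nat else a K n) N Hinf Hmono)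
        as [N' [v Hv]].
      exists (max N N'), (fun j => if Nat.eq_dec j K then v else tau j).
      intros n Hn Hhn j Hj. destruct (Nat.eq_dec j K) as [->|Hne].
      + apply Hv; [lia|exact Hhn].
      + apply Htau; [lia|exact Hhn|lia]. }
  apply complete_along; auto.
  intros eps Heps.
  destruct (archimed_cor1 (eps/2)) as [M [HM HM0]]; [lra|].
  destruct (Hstab M) as [N [tau Htau]].
  exists N. intros n m Hn Hm Hhn Hhm.
  pose proof (Hc (M-1)%nat n) as H1. pose proof (Hc (M-1)%nat m) as H2.
  rewrite (Htau n Hn Hhn (M-1)%nat ltac:(lia)) in H1.
  rewrite (Htau m Hm Hhm (M-1)%nat ltac:(lia)) in H2.
  replace (S (M-1)) with M in H1, H2 by lia.
  pose proof Hmet as [_ [_ [Hsym Htri]]].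
  pose proof (Htri (x n) (cen (M-1)%nat (tau (M-1)%nat)) (x m)) as H3.
  rewrite (Hsym (x n) (cen (M-1)%nat (tau (M-1)%nat))) in H3. lra.
Qed.

Theorem mainTheorem17 (X : Type) (d : X -> X -> R) (x : nat -> X)
    (Hmet : is_metric d) (Hcpt : metric_compact d) (Hdense : dense_seq d x) :
  (exists c : nat -> nat -> bool,
     forall h : nat -> bool, infinite_set h -> homogeneous c h ->
       converges_along d x h) /\
  (exists S : (nat -> bool) -> (nat -> bool), borel_selector (conv_family d x) S).
Proof.
  destruct (address_system d x Hmet Hcpt) as [a [B [cen [Ha Hc]]]].
  split.
  - exists (col a). intros h Hinf Hhom. exact (part1 d x Hmet Hcpt a B cen Ha Hc h Hinf Hhom).
  - exists (Sel a). split; [apply Sel_borel_map|]. split; [intros f n; apply Sel_sub|]. split.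
    + intro f. unfold conv_family. exact (Sel_conv d x Hmet Hcpt a cen Hc f).
    + intros f Hf. exact (Sel_inf a B f Ha Hf).
Qed.
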